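(* For every $n\ge1$, the DFA $\mathcal W_n$ defined below is minimal, accepts a right ideal, and its transition semigroup has size $n^{n-1}$.
   Context: $Q_n=\{0,\dots,n-1\}$. Notation: $(p\to q)$ maps $p$ to $q$ and fixes all other states; $(p_0,\dots,p_{k-1})$ is the cyclic permutation $p_0\mapsto\cdots\mapsto p_{k-1}\mapsto p_0$ fixing other states; $\mathbf 1$ is the identity. For $n\ge3$, $\mathcal W_n$ has states $Q_n$, initial state $0$, final states $\{n-1\}$, alphabet $\{a,b,c,d\}$, with $a$ inducing $(0,1,\dots,n-2)$, $b$ inducing $(0,1)$, $c$ inducing $(n-2\to 0)$, $d$ inducing $(n-2\to n-1)$ (for $n=3$, $a$ and $b$ coincide and alphabet $\{a,c,d\}$ suffices). $\mathcal W_2$ has states $Q_2$, initial $0$, final $\{1\}$, alphabet $\{a,b\}$, $a$ inducing $(0\to1)$ and $b$ inducing $\mathbf 1$. $\mathcal W_1$ has the single state $0$, which is initial and final, alphabet $\{a\}$, $a$ inducing $\mathbf 1$. A right ideal is a nonempty $L$ with $L=L\Sigma^*$. The transition semigroup is the set of state transformations induced by nonempty words. *)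

(* Defs.v *)
From mathcomp Require Import all_boot.
Set Implicit Arguments. Unset Strict Implicit. Unset Printing Implicit Defensive.

Record dfa (S : finType) := Dfa {
  st : finType;
  delta : S -> st -> st;
  init : st;
  final : pred st }.
Arguments st {S} d.
Arguments delta {S} d _ _.
Arguments init {S} d.
Arguments final {S} d _.

Definition run (S : finType) {D : dfa S} (q : st D) (w : seq S) : st D :=
  foldl (fun p x => delta D x p) q w.

Definition accepts (S : finType) (D : dfa S) (w : seq S) : bool :=
  final D (run (init D) w).

Definition right_ideal (S : finType) (L : seq S -> Prop) : Prop :=
  (exists w, L w) /\ (forall w, L w <-> exists u v, w = u ++ v /\ L u).

Definition minimal (S : finType) (D : dfa S) : Prop :=
  forall D' : dfa S, (forall w, accepts D' w = accepts D w) -> #|st D| <= #|st D'|.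

Definition in_trans_semigroup (S : finType) (D : dfa S) (f : {ffun st D -> st D}) : Prop :=
  exists w : seq S, w <> [::] /\ forall q, f q = run q w.

Definition trans_semigroup_card (S : finType) (D : dfa S) (k : nat) : Prop :=
  exists T : {set {ffun st D -> st D}},
    (forall f, f \in T <-> in_trans_semigroup f) /\ #|T| = k.

(* number of letters: 4 (a,b,c,d) for n >= 3, 2 (a,b) for n = 2, 1 (a) for n = 1.
   Letters are indexed 0 = a, 1 = b, 2 = c, 3 = d. *)
Definition nletters (n : nat) : nat := if 3 <= n then 4 else n.

Definition W_act (n x q : nat) : nat :=
  if 3 <= n then
    match x with
    | 0 => (* a = (0,1,...,n-2) *)
        if q < n - 2 then q.+1 else if q == n - 2 then 0 else q
    | 1 => (* b = (0,1) *)
        if q == 0 then 1 else if q == 1 then 0 else q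
    | 2 => (* c = (n-2 -> 0) *)
        if q == n - 2 then 0 else q
    | _ => (* d = (n-2 -> n-1) *)
        if q == n - 2 then n - 1 else q
    end
  else if n == 2 then
    (* a = (0 -> 1), b = identity *)
    (if x == 0 then (if q == 0 then 1 else q) else q)
  else q .

(* W_act n x q < n whenever q < n, so insubd never uses its default. *)
Definition W_delta (n : nat) (x : 'I_(nletters n)) (q : 'I_n) : 'I_n :=
  insubd q (W_act n x q).

Definition W (n : nat) (hn : 0 < n) : dfa 'I_(nletters n) :=
  @Dfa _ 'I_n (@W_delta n) (Ordinal hn)
       (fun q : 'I_n => nat_of_ord q == n.-1).

(* Main.v *)
Require Import Defs.
From mathcomp Require Import all_boot.
From mathcomp Require Import zify.
Set Implicit Arguments. Unset Strict Implicit. Unset Printing Implicit Defensive.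

Definition runN n (w : seq 'I_(nletters n)) (q : nat) : nat :=
  foldl (fun p (x : 'I_(nletters n)) => W_act n x p) q w.

Lemma runN_cat n u v q : runN (u ++ v) q = runN (n:=n) v (runN u q).
Proof. by rewrite /runN foldl_cat. Qed.

Lemma W_act_lt n x q : q < n -> W_act n x q < n.
Proof.
move=> Hq; rewrite /W_act; case: ifP => H3.
  by case: x => [|[|[|x]]] /=; repeat case: ifP => ?; lia.
by repeat case: ifP => ?; lia.
Qed.

Lemma W_act_last n x : 0 < n -> W_act n x n.-1 = n.-1.
Proof.
move=> Hn; rewrite /W_act; case: ifP => H3.
  by case: x => [|[|[|x]]] /=; repeat case: ifP => ?; lia.
by repeat case: ifP => ?; lia.
Qed.

Lemma runN_lt n w q : q < n -> runN (n:=n) w q < n.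
Proof. by elim: w q => //= x w IH q Hq; apply/IH/W_act_lt. Qed.

Lemma runN_last n w : 0 < n -> runN (n:=n) w n.-1 = n.-1.
Proof. by move=> Hn; elim: w => //= x w IH; rewrite W_act_last. Qed.

Lemma val_run n (hn : 0 < n) (q : 'I_n) w :
  val (@run _ (W hn) q w) = runN w (val q).
Proof.
elim: w q => //= x w IH q; rewrite IH; congr runN.
by rewrite /W_delta insubdK // unfold_in /= W_act_lt.
Qed.

Lemma run_cat S (D : dfa S) (q : st D) u v : run q (u ++ v) = run (run q u) v.
Proof. by rewrite /run foldl_cat. Qed.

Lemma card_fix m :
  #|[set f : {ffun 'I_m.+1 -> 'I_m.+1} | f ord_max == ord_max]| = m.+1 ^ m.
Proof.
pose ext (g : {ffun 'I_m -> 'I_m.+1}) : {ffun 'I_m.+1 -> 'I_m.+1} :=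
  [ffun i => oapp g ord_max (unlift ord_max i)].
have -> : [set f : {ffun 'I_m.+1 -> 'I_m.+1} | f ord_max == ord_max] = ext @: setT.
  apply/setP => f; rewrite inE; apply/eqP/imsetP.
    move=> Hf; exists [ffun j => f (lift ord_max j)] => //.
    apply/ffunP => i; rewrite /ext ffunE; case: unliftP => [j ->|->] //=.
    by rewrite ffunE.
  by case=> g _ ->; rewrite /ext ffunE unlift_none.
rewrite card_imset; last first.
  move=> g g' E; apply/ffunP => j.
  have := congr1 (fun h : {ffun 'I_m.+1 -> 'I_m.+1} => h (lift ord_max j)) E.
  by rewrite /ext /= !ffunE liftK.
by rewrite cardsT card_ffun !card_ord.
Qed.

Ltac noif t := lazymatch t with context [if _ then _ else _] => fail | _ => idtac end.
Ltac eqcases := repeat match goal with |- context [?a == ?b] => noif a; noif b; case: (a =P b) => ? /= end.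
Ltac ltcases := repeat match goal with |- context [?a < ?b] => noif a; noif b; case: (ltnP a b) => ? /= end.
Ltac sw := eqcases; ltcases; eqcases; try lia.

Section Big.
Variable k : nat.
Local Notation n := k.+3.
Local Notation m := k.+2.
Definition Lt := 'I_(nletters n).
Definition la : Lt := @Ordinal 4 0 isT.
Definition lb : Lt := @Ordinal 4 1 isT.
Definition lc : Lt := @Ordinal 4 2 isT.
Definition ld : Lt := @Ordinal 4 3 isT.

Lemma actA q : W_act n la q = if q < k.+1 then q.+1 else if q == k.+1 then 0 else q.
Proof. by []. Qed.
Lemma actB q : W_act n lb q = if q == 0 then 1 else if q == 1 then 0 else q.
Proof. by []. Qed.
Lemma actC q : W_act n lc q = if q == k.+1 then 0 else q.
Proof. by []. Qed.
Lemma actD q : W_act n ld q = if q == k.+1 then m else q.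
Proof. by []. Qed.

Definition G (f : nat -> nat) := exists w : seq Lt, w <> [::] /\ forall q, q < n -> f q = runN w q.

Lemma G_ext f g : G f -> (forall q, q < n -> f q = g q) -> G g.
Proof. rewrite /G => -[w [w0 Hw]] E; exists w; split=> // q Hq; by rewrite -E ?Hw. Qed.

Lemma G_comp f g : G f -> G g -> G (fun q => g (f q)).
Proof.
rewrite /G => -[u [u0 Hu]] [v [v0 Hv]]; exists (u ++ v); split; first by case: u u0 Hu.
by move=> q Hq; rewrite runN_cat Hu // Hv // runN_lt.
Qed.

Lemma G_letter (x : Lt) : G (W_act n x).
Proof. by exists [:: x]. Qed.

Lemma G_id : G id.
Proof.
apply: G_ext (G_comp (G_letter lb) (G_letter lb)) _ => q Hq.
rewrite !actB; sw.
Qed.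

Definition rot j q := if q < m then (q + j) %% m else q.

Lemma G_rot j : G (rot j).
Proof.
elim: j => [|j IH].
  by apply: G_ext G_id _ => q Hq; rewrite /rot; case: ifP => // H; rewrite addn0 modn_small.
apply: G_ext (G_comp IH (G_letter la)) _ => q Hq.
rewrite actA /rot; case: (ltnP q m) => H; last by (have -> : q = m by lia); sw.
have Hr : (q + j) %% m < m by rewrite ltn_mod.
rewrite addnS -[(q + j).+1]addn1 -(modnDml (q + j) 1).
move: Hr; set r := (q + j) %% m => Hr.
case: (ltnP r k.+1) => H2.
  by rewrite modn_small ?addn1 //; lia.
have -> : r = k.+1 by lia.
by rewrite eqxx addn1 modnn.
Qed.

Definition swap (x y q : nat) : nat := if q == x then y else if q == y then x else q.

Lemma swapK x y q : swap x y (swap x y q) = q.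
Proof. by rewrite /swap; sw. Qed.
Lemma swap_lt x y q p : x < p -> y < p -> q < p -> swap x y q < p.
Proof. by rewrite /swap; sw. Qed.
Lemma swapC x y q : swap x y q = swap y x q.
Proof. by rewrite /swap; sw. Qed.

Lemma G_swap_adj j : j.+1 < m -> G (swap j j.+1).
Proof.
move=> Hj.
apply: G_ext (G_comp (G_comp (G_rot (m - j)) (G_letter lb)) (G_rot j)) _ => q Hq.
rewrite actB.
case: (ltnP q m) => Hqm; last first.
  have -> : q = m by lia.
  by rewrite /rot /swap ltnn; sw.
have Er : rot (m - j) q = (q + (m - j)) %% m by rewrite /rot Hqm.
rewrite Er; set r := (q + (m - j)) %% m.
have Hr : r < m by rewrite ltn_mod.
have Hrj : (r + j) %% m = q.
  by rewrite modnDml -addnA subnK ?modnDr ?modn_small //; lia.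
rewrite /rot.
case: eqP => [r0|r0].
  rewrite (_ : 1 < m) // (modn_small (_ : 1 + j < m)) //.
  have qj : q = j by rewrite -Hrj r0 add0n modn_small //; lia.
  by rewrite /swap qj eqxx.
case: eqP => [r1|r1].
  rewrite (_ : 0 < m) // (modn_small (_ : j < m)) //; last lia.
  have qj : q = j.+1 by rewrite -Hrj r1 add1n modn_small.
  by rewrite /swap qj; case: ifP => /eqP ?; [lia|rewrite eqxx].
rewrite Hr Hrj /swap.
case: ifP => /eqP qj.
  exfalso; apply: r0.
  have : (r + j == 0 + j %[mod m]) by rewrite Hrj add0n modn_small; [apply/eqP|lia].
  by rewrite eqn_modDr mod0n modn_small // => /eqP.
case: ifP => /eqP qj1 //.
exfalso; apply: r1.
have : (r + j == 1 + j %[mod m]) by rewrite Hrj add1n modn_small; [apply/eqP|lia].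
by rewrite eqn_modDr (modn_small (_ : 1 < m)) // modn_small // => /eqP.
Qed.

Lemma G_swap x y : x < m -> y < m -> G (swap x y).
Proof.
wlog xy : x y / x <= y.
  move=> W Hx Hy; case: (leqP x y) => H; first exact: W.
  by apply: G_ext (W y x _ Hy Hx) _ => [|q _]; [lia|rewrite swapC].
move=> Hx Hy; case: (ltnP x y) => H; last first.
  have -> : y = x by lia.
  by apply: G_ext G_id _ => q _; rewrite /swap; sw.
have [d Ed] : exists d, y = x + d.+1 by exists (y - x).-1; lia.
rewrite Ed in Hy *; elim: d Hy {H xy Ed} => [|d IH] Hy.
  by rewrite addn1; apply: G_swap_adj; lia.
have Hs := G_swap_adj (_ : (x + d.+1).+1 < m).
apply: G_ext (G_comp (G_comp (Hs _) (IH _)) (Hs _)) _ => [||| q _]; try lia.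
rewrite /swap; sw.
Qed.

Lemma G_perm_aux j : j <= m -> forall f, (forall q, q < n -> f q < n) ->
  (forall q q', q < n -> q' < n -> f q = f q' -> q = q') ->
  (forall q, j <= q -> q < n -> f q = q) -> G f.
Proof.
elim: j => [|j IH] Hj f Hb Hi Hfix.
  by apply: G_ext G_id _ => q Hq; rewrite Hfix.
have [fj|fj] := eqVneq (f j) j.
  apply: IH => // [|q q1 q2]; first lia.
  case: (eqVneq q j) => [->//|qj]; apply: Hfix; lia.
have fjn : f j < n by apply: Hb; lia.
have fjl : f j < j.
  case: (ltngtP (f j) j) => // H; last by move/eqP: fj.
  exfalso; move/eqP: fj; apply; apply: Hi => //; first lia.
  by rewrite Hfix.
pose s q := swap j (f j) (f q).
apply: G_ext (G_comp (IH _ s _ _ _) (G_swap (_ : j < m) (_ : f j < m))) _ => //; try lia.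
- by move=> q Hq; apply: swap_lt => //; [lia|apply: Hb].
- move=> q q' Hq Hq' E; apply: Hi => //.
  by rewrite -(swapK j (f j) (f q)) -(swapK j (f j) (f q')) /s -/(s q) E.
- move=> q q1 q2; rewrite /s; case: (eqVneq q j) => [->|qj].
    by rewrite /swap eqxx (negbTE fj).
  move/eqP: qj => qj.
  rewrite (Hfix q); try lia.
  rewrite /swap; sw.
- by move=> q Hq; rewrite /s swapK.
Qed.

Lemma G_perm f : (forall q, q < n -> f q < n) ->
  (forall q q', q < n -> q' < n -> f q = f q' -> q = q') -> f m = m -> G f.
Proof.
move=> Hb Hi Hm; apply: (G_perm_aux (leqnn m)) => // q q1 q2.
by have -> : q = m by lia.
Qed.

Lemma G_conj P P' (Z : nat -> nat) i z : G P -> G P' -> G Z ->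
  (forall q, q < n -> P' (P q) = q) -> P i = k.+1 -> i < n ->
  (forall q, q != k.+1 -> Z q = q) -> Z k.+1 = z ->
  G (fun q => if q == i then P' z else q).
Proof.
move=> HP HP' HZ K Pi Hi Zq Zz.
apply: G_ext (G_comp (G_comp HP HZ) HP') _ => q Hq /=.
case: (eqVneq q i) => [->|qi]; first by rewrite Pi Zz.
rewrite Zq ?K //; apply/eqP => E; move/eqP: qi; apply.
by rewrite -(K q) // -(K i) // E Pi.
Qed.

Lemma G_elem i j : i < m -> j < n -> i != j -> G (fun q => if q == i then j else q).
Proof.
move=> Hi Hj /eqP ij.
case: (ltnP j m) => Hjm; last first.
  have Ej : j = m by lia.
  apply: G_ext (@G_conj (swap i k.+1) (swap i k.+1) (W_act n ld) i m
     (G_swap _ _) (G_swap _ _) (G_letter ld) _ _ _ _ _) _ => //; try lia.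
  - by move=> q _; rewrite swapK.
  - by rewrite /swap; sw.
  - by move=> q /eqP qk; rewrite actD; sw.
  - by rewrite actD eqxx.
  - by move=> q _; rewrite Ej /swap; sw.
pose j' := swap i k.+1 j.
have Hj' : j' < m by apply: swap_lt.
apply: G_ext (@G_conj (fun q => swap j' 0 (swap i k.+1 q)) (fun q => swap i k.+1 (swap j' 0 q))
    (W_act n lc) i 0 (G_comp (G_swap _ _) (G_swap _ _)) (G_comp (G_swap _ _) (G_swap _ _))
     (G_letter lc) _ _ _ _ _) _ => //; try lia.
- by move=> q _; rewrite !swapK.
- by rewrite /j' /swap; sw.
- by move=> q /eqP qk; rewrite actC; sw.
- by rewrite actC eqxx.
- move=> q _; have -> : swap i k.+1 (swap j' 0 0) = j.
    have -> : swap j' 0 0 = j' by rewrite /swap; sw.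
    by rewrite /j' swapK.
  by [].
Qed.

Section Fin.
Variable hn : 0 < n.
Definition GI (f : 'I_n -> 'I_n) :=
  exists w : seq Lt, w <> [::] /\ forall q, f q = @run _ (W hn) q w.

Lemma lift_G f g : G g -> (forall q : 'I_n, val (f q) = g (val q)) -> GI f.
Proof.
rewrite /G /GI => -[w [w0 Hw]] E; exists w; split; first exact: w0.
move=> q; apply: val_inj; rewrite E val_run Hw //; exact: ltn_ord.
Qed.

Lemma GI_ext f g : GI f -> (forall q, f q = g q) -> GI g.
Proof. rewrite /GI => -[w [w0 Hw]] E; exists w; split=> // q; by rewrite -E. Qed.

Lemma GI_comp f g : GI f -> GI g -> GI (fun q => g (f q)).
Proof.
rewrite /GI => -[u [u0 Hu]] [v [v0 Hv]]; exists (u ++ v); split; first by case: u u0 Hu.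
by move=> q; rewrite run_cat Hu Hv.
Qed.

Lemma noninj_codom (f : 'I_n -> 'I_n) : ~~ injectiveb f -> exists y, y \notin codom f.
Proof.
move=> Hn; case: (pickP (fun y => y \notin codom f)) => [y Hy|none]; first by exists y.
exfalso; move/negP: Hn; apply; apply/injectiveP.
have : #|[seq f x | x in 'I_n]| == #|'I_n|.
  rewrite (eq_card (B := 'I_n)) // => y; rewrite inE.
  by have := none y => /= /negbFE.
by move/image_injP => H x y; apply: H.
Qed.

Lemma GI_inj (f : 'I_n -> 'I_n) : injectiveb f -> f ord_max = ord_max -> GI f.
Proof.
move=> /injectiveP Hinj Hf.
apply: (@lift_G f (fun q => if q < n then val (f (inord q)) else q)); last first.
  by move=> q; rewrite ltn_ord inord_val.
apply: G_perm.
- by move=> q Hq; rewrite Hq; exact: ltn_ord.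
- move=> q q' Hq Hq'; rewrite Hq Hq' => /val_inj /Hinj E.
  by move: E => /(f_equal (@nat_of_ord n)); rewrite !inordK.
- have -> : inord m = ord_max :> 'I_n by apply: val_inj; rewrite /= inordK.
  by rewrite ltnSn Hf.
Qed.

Lemma GI_all_aux d (f : 'I_n -> 'I_n) :
  n - #|codom f| <= d -> f ord_max = ord_max -> GI f.
Proof.
elim: d f => [|d IH] f Hd Hf; case: (boolP (injectiveb f)) => Hinj;
  try exact: GI_inj.
all: have [y Hy] := noninj_codom Hinj.
all: have Hlt : #|codom f| < #|'I_n|
  by apply: proper_card; apply/properP; split; [apply/subsetP|exists y].
all: rewrite card_ord in Hlt.
  lia.
have [i [j [ij Ei imax]]] : exists i j, [/\ i != j, f i = f j & i != ord_max].
  move/injectivePn: Hinj => [i [j ij Eij]].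
  case: (eqVneq i ord_max) => [im|im]; last by exists i, j.
  exists j, i; rewrite eq_sym Eij; split => //.
  by rewrite -im eq_sym.
pose s q := if q == i then y else f q.
pose e q := if q == i then j else q.
apply: (@GI_ext (fun q => s (e q))).
  apply: GI_comp.
    apply: (@lift_G e (fun q => if q == val i then val j else q)).
      apply: G_elem.
      - move: imax => /eqP imax; have Hi := ltn_ord i.
        have Hm : nat_of_ord i != m by apply/eqP => E; apply: imax; apply: val_inj.
        change (nat_of_ord i < m); move/eqP: Hm; lia.
      - exact: ltn_ord.
      - exact: ij.
    move=> q; rewrite /e; case: (eqVneq q i) => [->|qi]; first by rewrite !eqxx.
    by rewrite ifN.
  apply: IH; last by rewrite /s eq_sym (negbTE imax).
  have : #|codom f| < #|codom s|.
    apply: proper_card; apply/properP; split.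
      apply/subsetP => z /codomP [x ->]; apply/codomP.
      case: (eqVneq x i) => [->|xi]; first by exists j; rewrite /s eq_sym (negbTE ij).
      by exists x; rewrite /s (negbTE xi).
    by exists y => //; apply/codomP; exists i; rewrite /s eqxx.
  move=> H; rewrite leq_subLR; rewrite leq_subLR in Hd.
  by apply: (leq_trans Hd); rewrite addnS -addSn leq_add2r.
move=> q; rewrite /s /e; case: (eqVneq q i) => [->|qi].
  by rewrite eq_sym (negbTE ij) Ei.
by rewrite (negbTE qi).
Qed.

Lemma GI_all (f : 'I_n -> 'I_n) : f ord_max = ord_max -> GI f.
Proof. by apply: (@GI_all_aux n); lia. Qed.
End Fin.
End Big.

Lemma accepts_run n (hn : 0 < n) w : accepts (W hn) w = (runN w 0 == n.-1).
Proof. by rewrite /accepts /= val_run. Qed.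

Lemma ri_gen n (hn : 0 < n) : (exists w, runN (n:=n) w 0 == n.-1) ->
  right_ideal (fun w => accepts (W hn) w).
Proof.
case=> w0 H0; split; first by exists w0; rewrite accepts_run.
move=> w; split => [Hw|[u [v [-> Hu]]]]; first by exists w, [::]; rewrite cats0.
move: Hu; rewrite !accepts_run runN_cat => /eqP ->; by rewrite runN_last.
Qed.

Lemma semi_gen m (hn : 0 < m.+1) :
  (forall F : {ffun 'I_m.+1 -> 'I_m.+1}, F ord_max = ord_max ->
     in_trans_semigroup (D := W hn) F) ->
  trans_semigroup_card (W hn) (m.+1 ^ m).
Proof.
move=> H; exists [set F : {ffun 'I_m.+1 -> 'I_m.+1} | F ord_max == ord_max].
split; last exact: card_fix.
move=> F; rewrite inE; split => [/eqP|]; first exact: H.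
case=> w [_ Hw]; apply/eqP; apply: val_inj; rewrite Hw val_run /=.
exact: (runN_last w (ltn0Sn m)).
Qed.

Lemma min_gen n (hn : 0 < n) (u : nat -> seq 'I_(nletters n)) :
  (forall q, q < n -> runN (u q) 0 = q) ->
  (forall q q', q < n -> q' < n ->
     (forall v, (runN (n:=n) v q == n.-1) = (runN v q' == n.-1)) -> q = q') ->
  minimal (W hn).
Proof.
move=> Hu Hd D' Hacc.
pose phi (q : 'I_n) := run (init D') (u q).
have : injective phi.
  move=> q q' E; apply: val_inj; apply: Hd; try exact: ltn_ord.
  move=> v; have E1 := Hacc (u q ++ v); have E2 := Hacc (u q' ++ v).
  rewrite !accepts_run !runN_cat !Hu ?ltn_ord // in E1 E2.
  by rewrite -E1 -E2 /accepts !run_cat -/(phi q) -/(phi q') E.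
by move/leq_card; rewrite card_ord.
Qed.

Section K.
Variable k : nat.
Local Notation n := k.+3.
Local Notation m := k.+2.

Lemma rotS j q : q < n -> rot k j.+1 q = W_act n (la k) (rot k j q).
Proof.
move=> Hq; rewrite actA /rot; case: (ltnP q m) => H; last first.
  by (have -> : q = m by lia); sw.
have Hr : (q + j) %% m < m by rewrite ltn_mod.
rewrite addnS -[(q + j).+1]addn1 -(modnDml (q + j) 1).
move: Hr; set r := (q + j) %% m => Hr.
case: (ltnP r k.+1) => H2; first by rewrite modn_small ?addn1 //; lia.
have -> : r = k.+1 by lia.
by rewrite eqxx addn1 modnn.
Qed.

Fixpoint aw j : seq (Lt k) := if j is j'.+1 then rcons (aw j') (la k) else [::].

Lemma runN_aw j q : q < n -> runN (aw j) q = rot k j q.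
Proof.
move=> Hq; elim: j => [|j IH] /=.
  by rewrite /rot; case: ifP => // H; rewrite addn0 modn_small.
by rewrite /runN foldl_rcons -/(runN _ _) IH rotS.
Qed.

Definition uw q : seq (Lt k) := if q < m then aw q else rcons (aw k.+1) (ld k).

Lemma uw_spec q : q < n -> runN (uw q) 0 = q.
Proof.
move=> Hq; rewrite /uw; case: ifP => H.
  by rewrite runN_aw // /rot add0n modn_small.
rewrite /runN foldl_rcons -/(runN _ _) runN_aw // actD /rot add0n modn_small //= eqxx.
lia.
Qed.

Lemma dist_k q q' : q < n -> q' < n ->
  (forall v : seq (Lt k), (runN v q == n.-1) = (runN v q' == n.-1)) -> q = q'.
Proof.
move=> Hq Hq' H.
have H0 := H [::]; rewrite /= in H0.
case: (ltnP q m) => qm; last first.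
  move: H0; rewrite (_ : q = m) ?eqxx; last lia.
  by move/esym/eqP; lia.
case: (ltnP q' m) => q'm; last first.
  move: H0; rewrite (_ : q' = m) ?eqxx; last lia.
  by move/eqP; lia.
have := H (rcons (aw (k.+1 - q)) (ld k)).
rewrite /runN !foldl_rcons -!/(runN _ _) !runN_aw // !actD /rot qm q'm.
have -> : q + (k.+1 - q) = k.+1 by lia.
rewrite -[k.+3.-1]/(k.+2) modn_small // eqxx.
have Hr : (q' + (k.+1 - q)) %% m < m by rewrite ltn_mod.
case: (eqVneq ((q' + (k.+1 - q)) %% m) k.+1) => [E|NE].
  move=> _.
  have : (q' + (k.+1 - q) == q + (k.+1 - q) %[mod m]).
    have -> : q + (k.+1 - q) = k.+1 by lia.
    by rewrite E modn_small.
  by rewrite eqn_modDr !modn_small // => /eqP.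
move: Hr NE; set r := (q' + (k.+1 - q)) %% m => Hr NE.
by rewrite eqxx => /esym/eqP; lia.
Qed.
End K.

Theorem lemma1 (n : nat) (hn : 0 < n) :
  minimal (W hn) /\ right_ideal (fun w => accepts (W hn) w) /\
  trans_semigroup_card (W hn) (n ^ n.-1).
Proof.
case: n hn => [//|[|[|k]]] hn.
- split; first apply: (@min_gen 1 hn (fun _ => [::])).
  + by move=> q; rewrite /=; lia.
  + by move=> q q' Hq Hq' _; lia.
  split; first by apply: ri_gen; exists [::].
  apply: semi_gen => F _; exists [:: @Ordinal (nletters 1) 0 isT]; split => // q.
  apply: val_inj; case: (F q) => [[|x] Hx] //=.
  by case: q => [[|y] Hy] //; rewrite /W_delta insubdK.
- pose a := @Ordinal (nletters 2) 0 isT.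
  pose b := @Ordinal (nletters 2) 1 isT.
  split; first apply: (@min_gen 2 hn (fun q => if q == 0 then [::] else [:: a])).
  + by case=> [|[|q]].
  + move=> q q' Hq Hq' H; move: (H [::]) => /=.
    by case: q Hq {H} => [|[|q]] //; case: q' Hq' => [|[|q']].
  split; first by apply: ri_gen; exists [:: a].
  apply: semi_gen => F HF.
  have [E|E] : F ord0 = ord0 \/ F ord0 = ord_max.
    case: (F ord0) => [[|[|x]] Hx]; [left|right|by []]; exact: val_inj.
  + exists [:: b]; split => // -[[|[|x]] Hx] //.
      have -> : Ordinal Hx = ord0 by apply: val_inj.
      by rewrite E; apply: val_inj; rewrite val_run.
    have -> : Ordinal Hx = ord_max by apply: val_inj.
    by rewrite HF; apply: val_inj; rewrite val_run.
  + exists [:: a]; split => // -[[|[|x]] Hx] //.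
      have -> : Ordinal Hx = ord0 by apply: val_inj.
      by rewrite E; apply: val_inj; rewrite val_run.
    have -> : Ordinal Hx = ord_max by apply: val_inj.
    by rewrite HF; apply: val_inj; rewrite val_run.
- split; first exact: (min_gen (uw_spec (k := k)) (@dist_k k)).
  split; first by apply: ri_gen; exists (uw k k.+2); rewrite uw_spec.
  apply: semi_gen => F HF.
  have [w [w0 Hw]] := GI_all hn HF.
  by exists w.
Qed.
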